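(* Let $p\in[0,1]$, $m\ge1$, $n\ge 2$, let $x_1\le\dots\le x_m$ be integers and $y_1\le\dots\le y_n$ be elements of $\mathbb Z':=\mathbb Z+\tfrac12$. Let $\mathbf X=(X_1,\dots,X_m)$ be an $m$-dimensional $p$-simple coalescing random walk on $\mathbb Z$ started at $(x_1,\dots,x_m)$ and $\mathbf Y=(Y_1,\dots,Y_n)$ an $n$-dimensional $(1-p)$-simple coalescing random walk on $\mathbb Z'$ started at $(y_1,\dots,y_n)$. For $1\le i\le m$, $1\le j\le n-1$ put $I^{\rightarrow}_{ij}(t):=1\{X_i(t)\in(y_j,y_{j+1}]\}$ and $I^{\leftarrow}_{ij}(t):=1\{x_i\in(Y_j(t),Y_{j+1}(t)]\}$. Then for every $t\ge0$ the random arrays $(I^{\rightarrow}_{ij}(t))_{i,j}$ and $(I^{\leftarrow}_{ij}(t))_{i,j}$ have the same joint distribution.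
   Context: A $p$-simple random walk on $\mathbb Z$ (resp. on $\mathbb Z'=\mathbb Z+\frac12$) is a continuous-time random walk that jumps at rate $1$, each jump going to the right neighbour with probability $p$ and to the left neighbour with probability $1-p$. An $m$-dimensional $p$-simple coalescing random walk started at ordered points $x_1\le\dots\le x_m$ is the system of $m$ indexed particles in which free particles perform independent $p$-simple random walks; whenever two particles occupy the same site, the particle of higher index becomes attached to the particle of lower index and thereafter moves together with it (particles starting at the same site are attached from time $0$). Notation: $1\{B\}$ is the indicator of $B$. *)

(* Defs.v *)
From HB Require Import structures.
From mathcomp Require Import all_boot all_order all_algebra.
From mathcomp Require Import all_classical all_reals all_analysis.
Set Implicit Arguments. Unset Strict Implicit. Unset Printing Implicit Defensive.
Import Order.TTheory GRing.Theory Num.Theory.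
Import numFieldNormedType.Exports.
Local Open Scope ring_scope.

(* Configuration of an m-dimensional coalescing walk: positions of the m
   indexed particles (positions live in R; on Z or on Z' = Z + 1/2). *)

Definition is_leader (R : realType) (m : nat) (z : 'I_m -> R) (i : 'I_m) : bool :=
  [forall j : 'I_m, (j < i)%N ==> (z j != z i)].

(* one step of the uniformized chain: choice c = (i, b); if i is a leader,
   its whole cluster (all particles on its site) jumps right (b = true)
   or left (b = false); otherwise nothing happens *)
Definition cstep (R : realType) (m : nat) (z : 'I_m -> R) (c : 'I_m * bool)
  : 'I_m -> R :=
  if is_leader z c.1 then
    fun j => if z j == z c.1 then z j + (if c.2 then 1 else -1) else z j
  else z.

Definition cweight (R : realType) (p : R) (m : nat) (c : 'I_m * bool) : R :=
  m%:R^-1 * (if c.2 then p else 1 - p).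

Definition kstep_prob (R : realType) (p : R) (m : nat) (x : 'I_m -> R) (k : nat)
  (E : ('I_m -> R) -> bool) : R :=
  \sum_(s : k.-tuple ('I_m * bool))
     (\prod_(c <- s) cweight p c) * (E (foldl (@cstep R m) x s))%:R.

(* P(E(Z(t))) where Z is the m-dimensional p-simple coalescing random walk
   started at x (each free particle / cluster jumps at rate 1), computed by
   uniformization with a Poisson(m t) number of steps of the embedded chain. *)
Definition crw_prob (R : realType) (p t : R) (m : nat) (x : 'I_m -> R)
  (E : ('I_m -> R) -> bool) : R :=
  limn (series (fun k : nat =>
     expR (- (m%:R * t)) * (m%:R * t) ^+ k / (k`!)%:R * kstep_prob p x k E)).

(* successor index (only used for j.+1 < n) *)
Definition nextI (n : nat) (j : 'I_n) : 'I_n := insubd j j.+1.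

(* Main.v *)
Require Import Defs.
From HB Require Import structures.
From mathcomp Require Import all_boot all_order all_algebra.
From mathcomp Require Import all_classical all_reals all_analysis.
From mathcomp Require Import ring lra zify.
Import Order.TTheory GRing.Theory Num.Theory.
Import numFieldNormedType.Exports.
Local Open Scope classical_set_scope.
Local Open Scope ring_scope.
Set Implicit Arguments. Unset Strict Implicit. Unset Printing Implicit Defensive.

Section Dual.
Variable R : realType.


Definition PX (p : R) (m : nat) (f : ('I_m -> R) -> R) (z : 'I_m -> R) : R :=
  \sum_(c : 'I_m * bool) cweight p c * f (cstep z c).

Lemma big_tupleS (T : finType) k (F : k.+1.-tuple T -> R) :
  \sum_(s : k.+1.-tuple T) F s = \sum_(c : T) \sum_(s : k.-tuple T) F [tuple of c :: s].
Proof.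
rewrite pair_big /=.
rewrite (reindex (fun cs : T * k.-tuple T => [tuple of cs.1 :: cs.2])) //=.
exists (fun s : k.+1.-tuple T => (thead s, [tuple of behead s])) => [[c s]|s] _ /=.
  by congr pair; apply: val_inj.
by apply: val_inj => /=; rewrite [in RHS](tuple_eta s).
Qed.

Lemma kstep_iter (p : R) m k (E : ('I_m -> R) -> bool) (x : 'I_m -> R) :
  kstep_prob p x k E = iter k (@PX p m) (fun z => (E z)%:R) x.
Proof.
elim: k x => [|k IH] x.
  rewrite /kstep_prob (big_pred1 [tuple]) /=; last by move=> s; apply/esym/eqP; exact: tuple0.
  by rewrite big_nil mul1r.
rewrite iterS /PX /kstep_prob big_tupleS; apply: eq_bigr => c _.
rewrite -IH /kstep_prob mulr_sumr; apply: eq_bigr => s _.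
by rewrite big_cons /= mulrA.
Qed.

Definition qw (p : R) (b : bool) : R := if b then p else 1 - p.

Definition LG (p : R) (m : nat) (f : ('I_m -> R) -> R) (z : 'I_m -> R) : R :=
  \sum_(c : 'I_m * bool) qw p c.2 * (f (cstep z c) - f z).

Lemma sum_pair m (F : 'I_m * bool -> R) :
  \sum_(c : 'I_m * bool) F c = \sum_(i : 'I_m) (F (i, true) + F (i, false)).
Proof.
transitivity (\sum_(i : 'I_m) \sum_(b : bool) F (i, b)).
  by rewrite pair_big; apply: eq_bigr => -[].
by apply: eq_bigr => i _; rewrite big_bool.
Qed.

Lemma sum_qw p m : \sum_(c : 'I_m * bool) qw p c.2 = m%:R.
Proof.
rewrite sum_pair /qw /= (eq_bigr (fun _ => 1)); last by move=> i _; rewrite addrC subrK.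
by rewrite sumr_const card_ord.
Qed.

Lemma PX_LG p m (hm : (0 < m)%N) f z :
  PX p f z = f z + m%:R^-1 * @LG p m f z.
Proof.
rewrite /PX /LG mulr_sumr.
have H : \sum_(c : 'I_m * bool) m%:R^-1 * qw p c.2 * f z = f z.
  rewrite -mulr_suml -mulr_sumr sum_qw mulVf ?mul1r //.
  by rewrite pnatr_eq0 -lt0n.
rewrite -{1}H -big_split /=; apply: eq_bigr => c _.
rewrite /cweight /qw; set u := (if _ then _ else _); set v := f (cstep z c); set w := f z; ring.
Qed.

Lemma PX_sum p m (N : nat) (a : nat -> R) (g : nat -> ('I_m -> R) -> R) z :
  PX p (fun z' => \sum_(j < N) a j * g j z') z = \sum_(j < N) a j * PX p (g j) z.
Proof.
rewrite /PX.
under eq_bigr do rewrite mulr_sumr.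
rewrite exchange_big /=; apply: eq_bigr => j _.
rewrite mulr_sumr; apply: eq_bigr => c _; ring.
Qed.

Lemma pascal (x : R) (G : nat -> R) k :
  \sum_(j < k.+1) 'C(k, j)%:R * x ^+ j * (G j + x * G j.+1) =
  \sum_(j < k.+2) 'C(k.+1, j)%:R * x ^+ j * G j.
Proof.
rewrite [RHS]big_ord_recl /= bin0 expr0 !mul1r.
under eq_bigr do rewrite mulrDr.
rewrite big_split /= big_ord_recl /= bin0 expr0 !mul1r -addrA; congr (_ + _).
under [in RHS]eq_bigr do rewrite binS natrD mulrDl mulrDl.
rewrite big_split /=; congr (_ + _).
  rewrite [RHS]big_ord_recr /= bin_small // mul0r mul0r addr0.
  by apply: eq_bigr => j _.
by apply: eq_bigr => j _; rewrite exprS /bump /= add1n; ring.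
Qed.

Lemma iterPX p m (hm : (0 < m)%N) k f z :
  iter k (@PX p m) f z =
  \sum_(j < k.+1) 'C(k, j)%:R * m%:R^-1 ^+ j * iter j (@LG p m) f z.
Proof.
elim: k z => [|k IH] z.
  by rewrite big_ord1 /= bin0 expr0 !mul1r.
have E : iter k (@PX p m) f = fun z' => \sum_(j < k.+1)
   ('C(k, j)%:R * m%:R^-1 ^+ j) * iter j (@LG p m) f z'.
  by apply: funext => z'; rewrite IH.
rewrite iterS E (PX_sum p k.+1 (fun j => 'C(k, j)%:R * m%:R^-1 ^+ j)
  (fun j => iter j (@LG p m) f)) -(pascal _ (fun j => iter j (@LG p m) f z)); apply: eq_bigr => j _.
by rewrite PX_LG // iterS.
Qed.

Lemma LG_bound p m (hp : 0 <= p <= 1) f (M : R) :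
  (forall z, `|f z| <= M) -> forall z, `|@LG p m f z| <= 2 * m%:R * M.
Proof.
move=> hf z; rewrite /LG.
apply: (le_trans (ler_norm_sum _ _ _)).
have qge : forall b, 0 <= qw p b.
  by case/andP: hp => h0 h1 [] /=; rewrite ?subr_ge0.
apply: (@le_trans _ _ (\sum_(c : 'I_m * bool) qw p c.2 * (2 * M))).
  apply: ler_sum => c _; rewrite normrM ger0_norm //; apply: ler_wpM2l => //.
  apply: (le_trans (ler_normB _ _)).
  by rewrite mulr_natl mulr2n; apply: lerD.
by rewrite -mulr_suml sum_qw; rewrite mulrA [_ * 2]mulrC.
Qed.

Lemma iterLG_bound p m (hp : 0 <= p <= 1) f :
  (forall z, `|f z| <= 1) -> forall j z, `|iter j (@LG p m) f z| <= (2 * m%:R) ^+ j.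
Proof.
move=> hf j; elim: j => [|j IH] z /=; first by rewrite expr0.
by rewrite exprS; apply: LG_bound.
Qed.


Definition hv (z : int) : R := z%:~R / 2.
Definition isI (r : R) := exists k : int, r = k%:~R.
Definition isH (r : R) := exists k : int, r = k%:~R + 2^-1.

Lemma hvD a b : hv a + hv b = hv (a + b).
Proof. by rewrite /hv intrD mulrDl. Qed.
Lemma hvN a : - hv a = hv (- a).
Proof. by rewrite /hv intrN mulNr. Qed.
Lemma hv_lt a b : (hv a < hv b) = (a < b).
Proof. by rewrite /hv ltr_pM2r ?invr_gt0 ?ltr0n // ltr_int. Qed.
Lemma hv_eq a b : (hv a == hv b) = (a == b).
Proof.
by rewrite /hv (can_eq (mulfK _)) ?eqr_int // pnatr_eq0.
Qed.
Lemma toI (k : int) : k%:~R = hv (2 * k).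
Proof. by rewrite /hv intrM [_ * k%:~R]mulrC mulfK // intr_eq0. Qed.
Lemma toH (k : int) : k%:~R + 2^-1 = hv (2 * k + 1).
Proof. by rewrite /hv intrD intrM mulrDl [_ * k%:~R]mulrC mulfK ?pnatr_eq0 // mul1r. Qed.
Lemma hone : 1 = hv 2.
Proof. by rewrite /hv divff ?pnatr_eq0. Qed.
Lemma hhalf : 2^-1 = hv 1.
Proof. by rewrite /hv mul1r. Qed.

Ltac hvsimp := rewrite ?hhalf ?hone ?hvN ?hvD ?hvN ?hvD ?hv_lt ?hv_eq.

Lemma cmpAB b xi yj a : isI xi -> isH yj -> isI a ->
 (yj < (if xi == a then xi + (if b then 1 else -1) else xi)) =
 ((if yj == a + (if b then 2^-1 else - 2^-1) then yj + (if ~~b then 1 else -1) else yj) < xi).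
Proof.
move=> [k ->] [l ->] [k0 ->]; rewrite toH !toI.
case: b => /=; hvsimp;
case: ifP => /eqP h1; case: ifP => /eqP h2; hvsimp; apply/idP/idP => ?; lia.
Qed.

Lemma cmpCD b xi yj a : isI xi -> isH yj -> isI a ->
 yj != a + (if b then 2^-1 else - 2^-1) ->
 (yj < (if xi == a then xi + (if b then 1 else -1) else xi)) = (yj < xi).
Proof.
move=> [k ->] [l ->] [k0 ->]; rewrite toH !toI.
case: b => /=; hvsimp => /eqP hne;
case: ifP => /eqP h1; hvsimp; apply/idP/idP => ?; lia.
Qed.

Lemma cmpEF b xi yj s : isI xi -> isH yj -> isH s ->
 xi != s + (if b then 2^-1 else - 2^-1) ->
 ((if yj == s then yj + (if b then 1 else -1) else yj) < xi) = (yj < xi).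
Proof.
move=> [k ->] [l ->] [k0 ->]; rewrite !toH !toI.
case: b => /=; hvsimp => /eqP hne;
case: ifP => /eqP h1; hvsimp; apply/idP/idP => ?; lia.
Qed.

Lemma isI_step b xi : isI xi -> isI (xi + (if b then 1 else -1)).
Proof.
move=> [k ->]; case: b.
  by exists (k + 1); rewrite intrD.
by exists (k - 1); rewrite intrB.
Qed.

Lemma isH_step b xi : isH xi -> isH (xi + (if b then 1 else -1)).
Proof.
move=> [k ->]; case: b.
  by exists (k + 1); rewrite intrD; ring.
by exists (k - 1); rewrite intrB; ring.
Qed.


Definition Hd m n (A : {ffun 'I_m * 'I_n -> bool}) (X : 'I_m -> R) (Y : 'I_n -> R) : bool :=
 [forall ij : 'I_m * 'I_n, (ij.2.+1 < n)%N ==> (A ij == (Y ij.2 < X ij.1 <= Y (nextI ij.2)))].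

Lemma H_M m n A (X X' : 'I_m -> R) (Y Y' : 'I_n -> R) :
  (forall i j, (Y j < X i) = (Y' j < X' i)) -> Hd A X Y = Hd A X' Y'.
Proof. by move=> h; apply: eq_forallb => ij; rewrite !leNgt !h. Qed.

Lemma leader_ex k (z : 'I_k -> R) s : (exists j, z j == s) ->
  exists j0, forall j, (is_leader z j && (z j == s)) = (j == j0).
Proof.
move=> [j1 hj1].
case: (@arg_minnP _ j1 (fun j => z j == s) (fun j : 'I_k => nat_of_ord j) hj1) => j0 hj0 hmin.
exists j0 => j; apply/idP/idP.
  case/andP => /forallP hl /eqP hj.
  have := hmin j; rewrite hj eqxx => /(_ isT) h0.
  rewrite -val_eqE /= eqn_leq h0 andbT.
  rewrite leqNgt; apply/negP => hlt.
  by have := hl j0; rewrite hlt /= hj (eqP hj0) eqxx.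
move/eqP ->; rewrite hj0 andbT; apply/forallP => j'; apply/implyP => hlt.
apply/negP => /eqP he; have := hmin j'; rewrite he hj0 => /(_ isT).
by rewrite leqNgt hlt.
Qed.

Definition goodX k (z : 'I_k -> R) := forall i, isI (z i).
Definition goodY k (z : 'I_k -> R) := forall i, isH (z i).

Lemma goodX_step k (z : 'I_k -> R) c : goodX z -> goodX (cstep z c).
Proof.
move=> hz; rewrite /cstep; case: ifP => _ // j.
by case: ifP => _ //; apply: isI_step.
Qed.

Lemma goodY_step k (z : 'I_k -> R) c : goodY z -> goodY (cstep z c).
Proof.
move=> hz; rewrite /cstep; case: ifP => _ // j.
by case: ifP => _ //; apply: isH_step.
Qed.

Definition esh (b : bool) : R := if b then 2^-1 else - 2^-1.

Lemma step_nl k (z : 'I_k -> R) c : ~~ is_leader z c.1 -> cstep z c = z.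
Proof. by move=> h; rewrite /cstep (negbTE h). Qed.

Lemma esh_swap (b : bool) (x y : R) :
  (y == x + esh (~~ b)) = (x == y + esh b).
Proof.
rewrite /esh; case: b => /=.
  by rewrite eq_sym subr_eq.
by rewrite [RHS]eq_sym subr_eq.
Qed.

Lemma eq_negb_sym (a c : bool) : (a == ~~ c) = (c == ~~ a).
Proof. by case: a; case: c. Qed.

Lemma qw_neg p b : qw (1 - p) (~~ b) = qw p b.
Proof. by rewrite /qw; case: b => /=; ring. Qed.

Lemma gen_dual p m n A (X : 'I_m -> R) (Y : 'I_n -> R) : goodX X -> goodY Y ->
  LG p (fun X' => (Hd A X' Y)%:R) X = LG (1 - p) (fun Y' => (Hd A X Y')%:R) Y.
Proof.
move=> gX gY.
pose TX := fun c : 'I_m * bool => qw p c.2 * ((Hd A (cstep X c) Y)%:R - (Hd A X Y)%:R).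
pose TY := fun d : 'I_n * bool => qw (1 - p) d.2 * ((Hd A X (cstep Y d))%:R - (Hd A X Y)%:R).
pose mt := fun (c : 'I_m * bool) (d : 'I_n * bool) =>
  [&& is_leader X c.1, is_leader Y d.1, d.2 == ~~ c.2 & Y d.1 == X c.1 + esh c.2].
have claimL : forall c, TX c = \sum_(d | mt c d) TX c.
  move=> [i b]; case: (boolP (is_leader X i)) => hl; last first.
    rewrite big1; last by move=> d; rewrite /mt /= (negbTE hl).
    by rewrite /TX step_nl // subrr mulr0.
  case: (pselect (exists j, Y j == X i + esh b)) => [hex|hnex].
    have [j0 hj0] := leader_ex hex.
    rewrite (big_pred1 (j0, ~~ b)) // => -[j b'].
    rewrite /mt /= hl /= xpair_eqE -hj0.
    by case: (b' == ~~ b); rewrite /= ?andbF ?andbT.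
  rewrite big_pred0; last first.
    move=> [j b']; rewrite /mt /=; apply/negP => /and4P [_ _ _ h].
    by apply: hnex; exists j.
  rewrite /TX /=; suff -> : Hd A (cstep X (i, b)) Y = Hd A X Y by rewrite subrr mulr0.
  apply: H_M => i' j'; rewrite /cstep /= hl; apply: cmpCD => //.
  by apply/negP => /eqP h; apply: hnex; exists j'; rewrite h.
have claimR : forall d, TY d = \sum_(c | mt c d) TY d.
  move=> [j b]; case: (boolP (is_leader Y j)) => hl; last first.
    rewrite big1; last by move=> c; rewrite /mt /= (negbTE hl) andbF.
    by rewrite /TY step_nl // subrr mulr0.
  case: (pselect (exists i, X i == Y j + esh b)) => [hex|hnex].
    have [i0 hi0] := leader_ex hex.
    rewrite (big_pred1 (i0, ~~ b)) // => -[i b'].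
    rewrite /mt /= hl /= xpair_eqE.
    rewrite eq_negb_sym.
    case: eqP => [->|] /=; last by rewrite !andbF.
    by rewrite andbT esh_swap -hi0.
  rewrite big_pred0; last first.
    move=> [i b']; rewrite /mt /=; apply/negP => /and4P [_ _ /eqP hb h].
    by apply: hnex; exists i; move: h; rewrite hb esh_swap.
  rewrite /TY /=; suff -> : Hd A X (cstep Y (j, b)) = Hd A X Y by rewrite subrr mulr0.
  apply: H_M => i' j'; rewrite /cstep /= hl; apply: cmpEF => //.
  by apply/negP => /eqP h; apply: hnex; exists i'; rewrite h.
have claimM : forall c d, mt c d -> TX c = TY d.
  move=> [i b] [j b'] /and4P [/= hlx hly /eqP hb /eqP hy]; subst b'.
  rewrite /TX /TY /=.
  rewrite qw_neg.
  suff -> : Hd A (cstep X (i, b)) Y = Hd A X (cstep Y (j, ~~ b)) by []. apply: H_M => i' j'.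
  rewrite /cstep /= hlx hly hy; exact: cmpAB.
rewrite /LG.
transitivity (\sum_(c : 'I_m * bool) TX c) => //.
transitivity (\sum_(c : 'I_m * bool) \sum_(d | mt c d) TY d).
  by apply: eq_bigr => c _; rewrite claimL; apply: eq_bigr => d hd; apply: claimM.
rewrite (exchange_big_dep xpredT) //=.
transitivity (\sum_(d : 'I_n * bool) TY d) => //.
by apply: eq_bigr => d _; rewrite [RHS]claimR.
Qed.

Lemma LG_congr p m (f g : ('I_m -> R) -> R) z :
  (forall c, f (cstep z c) = g (cstep z c)) -> f z = g z -> LG p f z = LG p g z.
Proof. by move=> h h0; apply: eq_bigr => c _; rewrite h h0. Qed.

Lemma iter_congr_good p m (G : ('I_m -> R) -> Prop) (f g : ('I_m -> R) -> R) :
  (forall z c, G z -> G (cstep z c)) ->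
  (forall z, G z -> f z = g z) -> forall k z, G z -> iter k (@LG p m) f z = iter k (@LG p m) g z.
Proof.
move=> hG hfg k; elim: k => [|k IH] z hz /=; first exact: hfg.
by apply: LG_congr => [c|]; apply: IH => //; apply: hG.
Qed.

Lemma comm1 p q m n (G : ('I_m -> R) -> ('I_n -> R) -> R) X Y :
  LG p (fun X' => LG q (G X') Y) X = LG q (fun Y' => LG p (fun X' => G X' Y') X) Y.
Proof.
rewrite /LG.
transitivity (\sum_(c : 'I_m * bool) \sum_(d : 'I_n * bool) qw p c.2 * qw q d.2 *
  (G (cstep X c) (cstep Y d) - G (cstep X c) Y - G X (cstep Y d) + G X Y)).
  apply: eq_bigr => c _; rewrite -sumrB mulr_sumr; apply: eq_bigr => d _; ring.
rewrite exchange_big; apply: eq_bigr => d _.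
rewrite -sumrB mulr_sumr; apply: eq_bigr => c _; ring.
Qed.

Lemma commk p q m n k (G : ('I_m -> R) -> ('I_n -> R) -> R) X Y :
  LG p (fun X' => iter k (@LG q n) (G X') Y) X =
  iter k (@LG q n) (fun Y' => LG p (fun X' => G X' Y') X) Y.
Proof.
elim: k G Y => [|k IH] G Y //=.
rewrite (comm1 p q (fun X' Y'' => iter k (@LG q n) (G X') Y'')).
congr LG; apply: funext => Y'; exact: IH.
Qed.

Lemma iter_dual p m n A k (X : 'I_m -> R) (Y : 'I_n -> R) : goodX X -> goodY Y ->
  iter k (@LG p m) (fun X' => (Hd A X' Y)%:R) X =
  iter k (@LG (1 - p) n) (fun Y' => (Hd A X Y')%:R) Y.
Proof.
elim: k X Y => [|k IH] X Y gX gY //.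
rewrite iterS.
transitivity (LG p (fun X' => iter k (@LG (1 - p) n) (fun Y' => (Hd A X' Y')%:R) Y) X).
  apply: LG_congr => [c|]; apply: IH => //; exact: goodX_step.
rewrite commk iterSr.
apply: (@iter_congr_good (1 - p) n (@goodY n)) => // [z c|z hz].
  exact: goodY_step.
exact: gen_dual.
Qed.

Lemma test (P : nat -> Prop) : (\forall n \near \oo, P n) -> exists N, forall n, (N <= n)%N -> P n.
Proof.
move=> [N _ HN]. exists N => n hn. by apply: HN.
Qed.
Lemma test2 (u : R ^nat) (l : R) : u @ \oo --> l -> limn u = l.
Proof. move=> h. exact: cvg_lim. Qed.

Lemma ser_ord (u : R ^nat) n : series u n = \sum_(k < n) u k.
Proof. by rewrite seriesEord. Qed.

Lemma S_eq (u v : R ^nat) N :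
  series (fun k => \sum_(j < k.+1) u (k - j)%N * v j) N = \sum_(j < N) v j * series u (N - j)%N.
Proof.
elim: N => [|N IH]; first by rewrite ser_ord !big_ord0.
rewrite seriesSr IH [RHS]big_ord_recr [X in _ + X]big_ord_recr /= subSnn subnn.
rewrite ser_ord big_ord1 addrA -big_split /= [v N * _]mulrC; congr (_ + _).
apply: eq_bigr => j _.
by rewrite subSn ?(ltnW (ltn_ord j)) // seriesSr mulrDr [u _ * _]mulrC.
Qed.

Lemma ser_nd (w : R ^nat) : (forall n, 0 <= w n) -> nondecreasing_seq (series w).
Proof. by move=> h; apply: (@nondecreasing_series _ w xpredT 0) => n _ _. Qed.

Lemma mertens (u v w : R ^nat) :
  (forall n, 0 <= u n) -> series u @ \oo --> (1 : R) -> (forall n, series u n <= 1) ->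
  (forall n, 0 <= w n) -> (forall n, `|v n| <= w n) -> cvgn (series w) ->
  limn (series (fun k => \sum_(j < k.+1) u (k - j)%N * v j)) = limn (series v).
Proof.
move=> u0 hU U1 w0 vw hw.
set W := limn (series w).
have Wle : forall N, series w N <= W by apply: nondecreasing_cvgn_le => //; exact: ser_nd.
have W0 : 0 <= W by apply: le_trans (Wle 0%N); rewrite ser_ord big_ord0.
have cvT : cvgn (series v).
  apply: normed_cvg.
  apply: (@series_le_cvg _ _ w) => // n; exact: normr_ge0.
set S := series _.
suff hST : (fun N => S N - series v N) @ \oo --> 0.
  apply/cvg_lim => //.
  have := cvgD cvT hST; rewrite addr0.
  suff E : (series v + (fun N => S N - series v N)) =1 S.
    by rewrite (eq_cvg _ _ E); move=> h; apply: h; exact: _.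
  by move=> N /=; rewrite addrC subrK.
apply/cvgr0Pnorm_le => e e0.
set e' := e / (W + 1).
have he' : 0 < e' by rewrite divr_gt0 // ltr_pwDr.
move/cvgrPdist_le: hU => /(_ e' he') [N1 _ HN1].
move/cvgrPdist_le: hw => /(_ e' he') [N2 _ HN2].
exists (N1 + N2)%N => // N /= hN.
set a := (N - N1)%N.
have hNa : N = (a + N1)%N by rewrite /a subnK //; lia.
have ha : (N2 <= a)%N by rewrite /a; lia.
rewrite /S S_eq ser_ord -sumrB.
have step1 : `|\sum_(j < N) (v j * series u (N - j)%N - v j)| <=
    \sum_(j < N) w j * (1 - series u (N - j)%N).
  apply: (le_trans (ler_norm_sum _ _ _)); apply: ler_sum => j _.
  have -> : v j * series u (N - j)%N - v j = v j * (series u (N - j)%N - 1) by ring.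
  rewrite normrM distrC [X in _ * X]ger0_norm ?subr_ge0 //.
  by apply: ler_wpM2r; rewrite ?subr_ge0.
apply: (le_trans step1).
move: step1 => _; rewrite hNa big_split_ord /=.
have p1 : \sum_(j < a) w (lshift N1 j) * (1 - series u (a + N1 - lshift N1 j)%N) <= W * e'.
  apply: (@le_trans _ _ (\sum_(j < a) w j * e')).
    apply: ler_sum => j _; apply: ler_wpM2l => //=.
    have hj := ltn_ord j.
    have h : (N1 <= a + N1 - j)%N by lia.
    exact: le_trans (ler_norm _) (HN1 _ h).
  by rewrite -mulr_suml ler_wpM2r ?(ltW he') // -ser_ord.
have p2 : \sum_(i < N1) w (rshift a i) * (1 - series u (a + N1 - rshift a i)%N) <= e'.
  apply: (@le_trans _ _ (\sum_(i < N1) w (a + i)%N)).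
    apply: ler_sum => i _; rewrite /= -[leRHS]mulr1; apply: ler_wpM2l => //.
    by rewrite gerBl ser_ord; apply: sumr_ge0 => k _; exact: u0.
  have -> : \sum_(i < N1) w (a + i)%N = series w (a + N1)%N - series w a.
    rewrite !ser_ord big_split_ord /=; ring.
  apply: (@le_trans _ _ (W - series w a)); first by rewrite lerB.
  by apply: le_trans (HN2 _ ha); apply: ler_norm.
apply: le_trans (lerD p1 p2) _.
have hW1 : W + 1 != 0 by rewrite gt_eqF // ltr_pwDr.
suff -> : W * e' + e' = e by [].
by rewrite /e'; field.
Qed.

Lemma term_eq (r t : R) (c : nat -> R) k : r != 0 ->
  expR (- (r * t)) * (r * t) ^+ k / (k`!)%:R *
     \sum_(j < k.+1) 'C(k, j)%:R * r^-1 ^+ j * c j =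
  \sum_(j < k.+1) (expR (- (r * t)) * exp_coeff (r * t) (k - j)%N) * (t ^+ j / (j`!)%:R * c j).
Proof.
move=> r0; rewrite mulr_sumr; apply: eq_bigr => j _.
have hj : (j <= k)%N by rewrite -ltnS.
rewrite /exp_coeff /= -(bin_fact hj) natrM natrM.
have E1 : (r * t) ^+ k = (r * t) ^+ (k - j) * (r ^+ j * t ^+ j).
  by rewrite -exprMn -exprD subnK.
rewrite E1 exprVn.
have h1 : 'C(k, j)%:R != 0 :> R by rewrite pnatr_eq0 -lt0n bin_gt0.
have h2 : (j`!)%:R != 0 :> R by rewrite pnatr_eq0 -lt0n fact_gt0.
have h3 : ((k - j)`!)%:R != 0 :> R by rewrite pnatr_eq0 -lt0n fact_gt0.
have h4 : r ^+ j != 0 by rewrite expf_neq0.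
by field; rewrite h1 h2 h3 h4.
Qed.

Lemma unif_lim (r t B : R) (c : nat -> R) : 0 < r -> 0 <= t -> 0 <= B ->
  (forall j, `|c j| <= B ^+ j) ->
  limn (series (fun k => expR (- (r * t)) * (r * t) ^+ k / (k`!)%:R *
     \sum_(j < k.+1) 'C(k, j)%:R * r^-1 ^+ j * c j)) =
  limn (series (fun j => t ^+ j / (j`!)%:R * c j)).
Proof.
move=> r0 t0 B0 hc.
have -> : (fun k => expR (- (r * t)) * (r * t) ^+ k / (k`!)%:R *
     \sum_(j < k.+1) 'C(k, j)%:R * r^-1 ^+ j * c j) =
  (fun k => \sum_(j < k.+1) (fun i => expR (- (r * t)) * exp_coeff (r * t) i) (k - j)%N *
     (fun j => t ^+ j / (j`!)%:R * c j) j).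
  by apply: funext => k; rewrite term_eq // gt_eqF.
have rt0 : 0 <= r * t by rewrite mulr_ge0 // ltW.
have hser : series (exp_coeff (r * t)) @ \oo --> expR (r * t) :=
  is_cvg_series_exp_coeff (r * t).
have Eu : series (fun i => expR (- (r * t)) * exp_coeff (r * t) i) =1
          (fun n => expR (- (r * t)) * series (exp_coeff (r * t)) n).
  by move=> n; rewrite !ser_ord mulr_sumr.
apply: (@mertens (fun i => expR (- (r * t)) * exp_coeff (r * t) i) (fun j => t ^+ j / (j`!)%:R * c j) (exp_coeff (B * t))).
- by move=> n; rewrite mulr_ge0 ?expR_ge0 ?exp_coeff_ge0.
- rewrite (eq_cvg _ _ Eu).
  have -> : (1 : R) = expR (- (r * t)) * expR (r * t) by rewrite mulrC expRxMexpNx_1.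
  exact: cvgMl_tmp.
- move=> n; rewrite Eu -(expRxMexpNx_1 (r * t)) [X in _ <= X]mulrC.
  apply: ler_wpM2l; first exact: expR_ge0.
  apply: nondecreasing_cvgn_le; last exact: is_cvg_series_exp_coeff.
  by apply: ser_nd => i; rewrite exp_coeff_ge0.
- by move=> n; rewrite exp_coeff_ge0 // mulr_ge0.
- move=> n; rewrite /exp_coeff /= normrM [X in X * _]ger0_norm ?divr_ge0 ?exprn_ge0 //.
  rewrite exprMn.
  have -> : B ^+ n * t ^+ n / (n`!)%:R = t ^+ n / (n`!)%:R * B ^+ n by ring.
  by apply: ler_wpM2l; rewrite ?divr_ge0 ?exprn_ge0.
- exact: is_cvg_series_exp_coeff.
Qed.
End Dual.

Local Close Scope classical_set_scope.
Local Open Scope ring_scope.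

Theorem mainTheorem2 (R : realType) (p : R) (m n : nat)
  (x : 'I_m -> int) (y : 'I_n -> R) (t : R) :
  0 <= p <= 1 -> (1 <= m)%N -> (2 <= n)%N ->
  (forall i j : 'I_m, (i <= j)%N -> x i <= x j) ->
  (forall i j : 'I_n, (i <= j)%N -> y i <= y j) ->
  (forall j : 'I_n, exists k : int, y j = k%:~R + 2^-1) ->
  0 <= t ->
  forall A : {ffun 'I_m * 'I_n -> bool},
    crw_prob p t (fun i => (x i)%:~R)
      (fun X => [forall ij : 'I_m * 'I_n, (ij.2.+1 < n)%N ==>
                  (A ij == (y ij.2 < X ij.1 <= y (nextI ij.2)))])
    =
    crw_prob (1 - p) t y
      (fun Y => [forall ij : 'I_m * 'I_n, (ij.2.+1 < n)%N ==>
                  (A ij == (Y ij.2 < (x ij.1)%:~R <= Y (nextI ij.2)))]).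
Proof.
move=> hp hm hn hx hy hyh ht A.
have hn0 : (0 < n)%N by apply: leq_trans hn.
have hp' : 0 <= 1 - p <= 1.
  by case/andP: hp => h0 h1; apply/andP; split; lra.
have gX : goodX (fun i => (x i)%:~R : R) by move=> i; exists (x i).
have gY : goodY y by [].
have b1 : forall b : bool, `|(b%:R : R)| <= 1.
  by case; rewrite ?normr1 ?normr0.
rewrite /crw_prob.
under [X in series X]eq_fun => k do rewrite kstep_iter iterPX //.
under [X in _ = limn (series X)]eq_fun => k do rewrite kstep_iter iterPX //.
rewrite (unif_lim (B := 2 * m%:R) (c := fun j => iter j (@LG _ p m) _ (fun i => (x i)%:~R)))
   ?ltr0n ?mulr_ge0 ?ler0n //; last first.
  by move=> j /=; refine (iterLG_bound hp _ j _) => z; apply: b1.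
rewrite (unif_lim (B := 2 * n%:R) (c := fun j => iter j (@LG _ (1 - p) n) _ y)) ?ltr0n ?mulr_ge0 ?ler0n //; last first.
  by move=> j /=; refine (iterLG_bound hp' _ j _) => z; apply: b1.
congr (limn (series _)); apply: funext => j; congr (_ * _).
exact: (@iter_dual _ p m n A j (fun i => (x i)%:~R) y gX gY).
Qed.
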